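(* Let $\mathbf u$ be an aperiodic infinite word over a finite alphabet whose language is closed under reversal, and let $N$ be an integer such that $T_{\mathbf u}(n)=0$ for all $n\ge N$. Then for every factor $w$ of $\mathbf u$ with $|w|\ge N$, the occurrences of $w$ and of $\overline w$ in $\mathbf u$ alternate: if $w\neq\overline w$, then between any two occurrences of $w$ in $\mathbf u$ there is an occurrence of $\overline w$, and between any two occurrences of $\overline w$ there is an occurrence of $w$.
   Context: An infinite word is aperiodic if it is not eventually periodic. For a finite word $w=w_0\cdots w_{n-1}$ its reversal is $\overline{w}=w_{n-1}\cdots w_0$; $w$ is a palindrome if $w=\overline{w}$. An occurrence of $w$ in $\mathbf u=u_0u_1\cdots$ is an index $i$ with $u_i\cdots u_{i+|w|-1}=w$. $\mathcal L_n(\mathbf u)$ is the set of factors of $\mathbf u$ of length $n$; the language is closed under reversal if every factor's reversal is a factor. $\mathcal C_{\mathbf u}(n)=\#\mathcal L_n(\mathbf u)$, $\mathcal P_{\mathbf u}(n)$ is the number of palindromes in $\mathcal L_n(\mathbf u)$, and $T_{\mathbf u}(n)=\mathcal C_{\mathbf u}(n+1)-\mathcal C_{\mathbf u}(n)+2-\mathcal P_{\mathbf u}(n+1)-\mathcal P_{\mathbf u}(n)$. *)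

(* Defs.v *)
From mathcomp Require Import all_boot all_order all_algebra.
From Stdlib Require Import ClassicalEpsilon.
Set Implicit Arguments. Unset Strict Implicit. Unset Printing Implicit Defensive.

Definition factor_at (A : Type) (u : nat -> A) (i n : nat) : seq A :=
  mkseq (fun k => u (i + k)) n.

Definition occurrence (A : eqType) (u : nat -> A) (w : seq A) (i : nat) : Prop :=
  factor_at u i (size w) = w.

Definition is_factor (A : eqType) (u : nat -> A) (w : seq A) : Prop :=
  exists i, occurrence u w i.

Definition is_factorb (A : eqType) (u : nat -> A) (w : seq A) : bool :=
  if excluded_middle_informative (is_factor u w) then true else false.

Definition palindrome (A : eqType) (w : seq A) : bool := rev w == w.

Definition eventually_periodic (A : Type) (u : nat -> A) : Prop :=
  exists p N, 0 < p /\ forall n, N <= n -> u (n + p) = u n.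

Definition aperiodic (A : Type) (u : nat -> A) : Prop := ~ eventually_periodic u.

Definition closed_under_reversal (A : eqType) (u : nat -> A) : Prop :=
  forall w, is_factor u w -> is_factor u (rev w).

Definition complexity (A : finType) (u : nat -> A) (n : nat) : nat :=
  #|[set t : n.-tuple A | is_factorb u t]|.

Definition pal_complexity (A : finType) (u : nat -> A) (n : nat) : nat :=
  #|[set t : n.-tuple A | is_factorb u t && palindrome t]|.

Definition T_u (A : finType) (u : nat -> A) (n : nat) : int :=
  ((complexity u n.+1)%:Z - (complexity u n)%:Z + 2
   - (pal_complexity u n.+1)%:Z - (pal_complexity u n)%:Z)%R.

(* Main.v *)
Require Import Defs.
From mathcomp Require Import all_boot all_order all_algebra.
From mathcomp Require Import zify.
From Stdlib Require Import ClassicalEpsilon Classical.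
Set Implicit Arguments. Unset Strict Implicit. Unset Printing Implicit Defensive.

Module G.

Section Grow.
Variables (T E : finType) (ends : E -> T * T) (S : {set T}) (F : {set E}).
Hypothesis endsS : forall f, f \in F -> ((ends f).1 \in S) && ((ends f).2 \in S).
Hypothesis cut : forall Y : {set T}, Y \subset S -> (exists a, a \in Y) ->
  (exists b, b \in S :\: Y) ->
  exists f, (f \in F) && (((ends f).1 \in Y) != ((ends f).2 \in Y)).

Definition inner (X : {set T}) := [set f in F | ((ends f).1 \in X) && ((ends f).2 \in X)].

Lemma grow_aux m : forall X : {set T}, #|S| - #|X| <= m -> X \subset S -> (exists a, a \in X) ->
  #|inner X| + #|S| <= #|F| + #|X|.
Proof.
elim: m => [|m IH] X hm XS [a aX].
  have eXS : X = S.
    apply/eqP; rewrite eqEcard XS /=; move: hm (subset_leq_card XS); clear; lia.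
  have -> : inner X = F.
    apply/setP => f; rewrite inE eXS; case fF: (f \in F) => //=; exact: endsS.
  by rewrite eXS.
have [SX|nSX] := boolP (S \subset X).
  have eXS : X = S by apply/eqP; rewrite eqEsubset XS SX.
  have -> : inner X = F.
    apply/setP => f; rewrite inE eXS; case fF: (f \in F) => //=; exact: endsS.
  by rewrite eXS.
have [b bS bX] : exists2 b, b \in S & b \notin X.
  by move/subsetPn: nSX => [b ? ?]; exists b.
have bSX : b \in S :\: X by rewrite inE bX bS.
have [f /andP [fF cr]] := cut XS (ex_intro _ a aX) (ex_intro _ b bSX).
have /andP [e1S e2S] := endsS fF.
pose c := if (ends f).1 \in X then (ends f).2 else (ends f).1.
have cS : c \in S by rewrite /c; case: ifP.
have cX : c \notin X.
  rewrite /c; case h1: ((ends f).1 \in X); last by rewrite h1.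
  by move: cr; rewrite h1; case: ((ends f).2 \in X).
pose X' := c |: X.
have X'S : X' \subset S by rewrite subUset sub1set cS XS.
have cX' : #|X'| = #|X|.+1 by rewrite cardsU1 cX.
have hm' : #|S| - #|X'| <= m.
  rewrite cX'; move: hm; clear; lia.
have := IH X' hm' X'S (ex_intro _ c (setU11 c X)).
have : #|inner X| < #|inner X'|.
  apply: proper_card; apply/properP; split.
    apply/subsetP => g; rewrite !inE => /andP [-> /andP [h1 h2]].
    by rewrite h1 h2 !orbT.
  exists f.
    rewrite !inE fF /c /=; case h1: ((ends f).1 \in X).
      by rewrite eqxx orbT.
    by rewrite eqxx /=; move: cr; rewrite h1; case: ((ends f).2 \in X); rewrite ?orbT.
  by rewrite inE fF /=; move: cr; case: ((ends f).1 \in X); case: ((ends f).2 \in X).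
rewrite cX'; clear; lia.
Qed.

Lemma grow (X : {set T}) : X \subset S -> (exists a, a \in X) -> #|inner X| + #|S| <= #|F| + #|X|.
Proof. move=> XS hX; apply: (@grow_aux #|S|) => //; exact: leq_subr. Qed.
End Grow.

End G.
Import G.

Module W.


Section W.
Variables (A : finType) (u : nat -> A).

Lemma is_factorbP w : reflect (is_factor u w) (is_factorb u w).
Proof. rewrite /is_factorb; case: excluded_middle_informative => h; by constructor. Qed.

Lemma occP w k : occurrence u w k <-> forall j, j < size w -> u (k + j) = nth (u 0) w j.
Proof.
split.
  by rewrite /occurrence => h j hj; rewrite -[in RHS]h /factor_at nth_mkseq.
move=> h; apply: (@eq_from_nth _ (u 0)); rewrite /factor_at size_mkseq // => j hj.
by rewrite nth_mkseq // h.
Qed.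

Lemma rev_far x : closed_under_reversal u -> is_factor u x ->
  forall i, exists j, i < j /\ occurrence u (rev x) j.
Proof.
move=> cr [p /occP hp] i.
set L := size x.
set M := i + p + L + 1.
have /cr [q /occP hq] : is_factor u (factor_at u 0 M) by exists 0; rewrite /occurrence /factor_at size_mkseq.
exists (q + i + 1); split; first lia.
apply/occP => k; rewrite size_rev => hk.
rewrite size_rev /factor_at size_mkseq in hq.
have := hq (i + 1 + k) ltac:(lia).
rewrite nth_rev ?size_mkseq; last lia.
rewrite nth_mkseq; last lia.
have -> : q + i + 1 + k = q + (i + 1 + k) by lia.
rewrite nth_rev // => ->.
have := hp (L - k.+1) ltac:(lia) => <-.
congr u; lia.
Qed.

Lemma recur x : closed_under_reversal u -> is_factor u x ->
  forall i, exists j, i < j /\ occurrence u x j.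
Proof.
move=> cr hx i; have := rev_far cr (cr _ hx) i; by rewrite revK.
Qed.

Definition ftup m k : m.-tuple A := @Tuple m A (factor_at u k m) (introT eqP (size_mkseq _ _)).

Lemma tnth_ftup m k (i : 'I_m) : tnth (ftup m k) i = u (k + i).
Proof. by rewrite (tnth_nth (u 0)) /= nth_mkseq. Qed.

End W.

End W.
Import W.

Module W2.

Section T.
Variable (A : finType).

Definition revt m (t : m.-tuple A) : m.-tuple A := [tuple of rev t].

Lemma revtK m : involutive (@revt m).
Proof. by move=> t; apply: val_inj; rewrite /= revK. Qed.

Lemma tnth_revt m (t : m.-tuple A) (i : 'I_m) : tnth (revt t) i = tnth t (rev_ord i).
Proof.
set x0 := tnth t i; by rewrite (tnth_nth x0 (revt t)) (tnth_nth x0 t) /= nth_rev size_tuple.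
Qed.

Definition pre n (e : n.+1.-tuple A) : n.-tuple A := [tuple tnth e (widen_ord (leqnSn n) i) | i < n].
Definition suf n (e : n.+1.-tuple A) : n.-tuple A := [tuple tnth e (lift ord0 i) | i < n].

Lemma suf_rev n (e : n.+1.-tuple A) : suf (revt e) = revt (pre e).
Proof.
apply: eq_from_tnth => i; rewrite tnth_mktuple !tnth_revt tnth_mktuple.
congr tnth; apply: val_inj => /=; rewrite /bump leq0n add1n; lia.
Qed.

Lemma pre_rev n (e : n.+1.-tuple A) : pre (revt e) = revt (suf e).
Proof.
apply: eq_from_tnth => i; rewrite tnth_mktuple !tnth_revt tnth_mktuple.
congr tnth; apply: val_inj => /=; rewrite /bump ?leq0n ?add1n; have := ltn_ord i; lia.
Qed.

Lemma pre_ftup (u : nat -> A) n k : pre (ftup u n.+1 k) = ftup u n k.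
Proof. by apply: eq_from_tnth => i; rewrite tnth_mktuple !tnth_ftup. Qed.

Lemma suf_ftup (u : nat -> A) n k : suf (ftup u n.+1 k) = ftup u n k.+1.
Proof. by apply: eq_from_tnth => i; rewrite tnth_mktuple !tnth_ftup lift0 addSnnS. Qed.

Definition rk m (t : m.-tuple A) : nat := enum_rank t.
Definition rep m (t : m.-tuple A) := if rk t <= rk (revt t) then t else revt t.

Lemma rk_inj m : injective (@rk m).
Proof. by move=> x y h; apply: enum_rank_inj; apply: val_inj. Qed.

Lemma rep_rev m (t : m.-tuple A) : rep (revt t) = rep t.
Proof.
rewrite /rep revtK; case: (ltngtP (rk t) (rk (revt t))) => h //.
by apply: rk_inj; rewrite h.
Qed.

Lemma rep_cases m (t : m.-tuple A) : rep t = t \/ rep t = revt t.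
Proof. by rewrite /rep; case: ifP; auto. Qed.

Lemma rep_eq m (x y : m.-tuple A) : rep x = rep y -> x = y \/ x = revt y.
Proof.
case: (rep_cases x) => ->; case: (rep_cases y) => -> h; auto.
- by right; rewrite -h revtK.
- by left; rewrite -[x]revtK h revtK.
Qed.

Lemma rep_idem m (t : m.-tuple A) : rep (rep t) = rep t.
Proof. by case: (rep_cases t) => h; rewrite [in LHS]h ?rep_rev. Qed.

Lemma rep_rk m (t : m.-tuple A) : rk (rep t) <= rk (revt (rep t)).
Proof.
rewrite /rep; case: ifP => // /negbT; rewrite -ltnNge revtK => h; exact: ltnW.
Qed.

Lemma rk_eq_pal m (t : m.-tuple A) : (rk t == rk (revt t)) = (revt t == t).
Proof.
apply/eqP/eqP => [h|->] //; by apply: rk_inj.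
Qed.

Lemma palE m (t : m.-tuple A) : palindrome t = (revt t == t).
Proof. by []. Qed.

End T.

End W2.
Import W2.

Module M.

Section M.
Variables (A : finType) (u : nat -> A).
Hypothesis cr : closed_under_reversal u.
Variable n : nat.

Lemma ftup_fac m k : is_factorb u (ftup u m k).
Proof.
apply/is_factorbP; exists k; by rewrite /occurrence size_tuple.
Qed.

Lemma fac_ftup m (t : m.-tuple A) : is_factorb u t -> exists k, ftup u m k = t.
Proof.
move/is_factorbP => [k hk]; exists k; apply: val_inj => /=.
by move: hk; rewrite /occurrence size_tuple.
Qed.

Lemma fac_rev m (t : m.-tuple A) : is_factorb u t -> is_factorb u (revt t).
Proof. by move/is_factorbP/cr/is_factorbP. Qed.

Lemma fac_revE m (t : m.-tuple A) : is_factorb u (revt t) = is_factorb u t.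
Proof.
apply/idP/idP; last exact: fac_rev.
by move/fac_rev; rewrite revtK.
Qed.

Definition V := [set t : n.-tuple A | is_factorb u t].
Definition E := [set t : n.+1.-tuple A | is_factorb u t].
Definition PV := [set t : n.-tuple A | is_factorb u t && palindrome t].
Definition PE := [set t : n.+1.-tuple A | is_factorb u t && palindrome t].
Definition sameE (e : n.+1.-tuple A) := rep (pre e) == rep (suf e).
Definition EL := [set e in E | sameE e].
Definition EN := [set e in E | ~~ sameE e].
Definition EQ := [set e in EN | rk e < rk (revt e)].
Definition QV := [set x in V | rk x <= rk (revt x)].
Definition ends (e : n.+1.-tuple A) := (rep (pre e), rep (suf e)).

Lemma sameE_rev e : sameE (revt e) = sameE e.
Proof. by rewrite /sameE pre_rev suf_rev !rep_rev eq_sym. Qed.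

Lemma ends_rev e : ends (revt e) = ((ends e).2, (ends e).1).
Proof. by rewrite /ends pre_rev suf_rev !rep_rev. Qed.

Lemma pal_same e : revt e = e -> sameE e.
Proof. by move=> h; rewrite /sameE -{1}h pre_rev rep_rev. Qed.

Lemma EN_rk e : e \in EN -> rk e != rk (revt e).
Proof.
rewrite inE rk_eq_pal => /andP [_ h]; apply/negP => /eqP he.
by move: h; rewrite pal_same.
Qed.

Lemma EN_rev e : (revt e \in EN) = (e \in EN).
Proof. by rewrite !inE fac_revE sameE_rev. Qed.

Lemma V_rev x : (revt x \in V) = (x \in V).
Proof. by rewrite !inE fac_revE. Qed.

Lemma countV : #|V| + #|PV| = 2 * #|QV|.
Proof.
have h1 := cardsID [set x : n.-tuple A | rk x <= rk (revt x)] V.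
have e1 : V :&: [set x : n.-tuple A | rk x <= rk (revt x)] = QV.
  by apply/setP => x; rewrite !inE.
have h2 := cardsID [set x : n.-tuple A | palindrome x] QV.
have e2 : QV :&: [set x : n.-tuple A | palindrome x] = PV.
  apply/setP => x; rewrite !inE palE.
  case: (is_factorb u x) => //=; case hp: (revt x == x); rewrite ?andbF //.
  by move/eqP: hp => ->; rewrite leqnn.
have e3 : QV :\: [set x : n.-tuple A | palindrome x] =
          (@revt A n) @^-1: (V :\: [set x : n.-tuple A | rk x <= rk (revt x)]).
  apply/setP => x; rewrite !inE palE revtK fac_revE -ltnNge.
  case: (is_factorb u x); rewrite ?andbF //=.
  by rewrite ltn_neqAle -rk_eq_pal andbT.
rewrite e1 in h1; rewrite e2 e3 card_preimset in h2; last exact: (can_inj (@revtK _ _)).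
lia.
Qed.

Lemma countE : #|E| = #|EL| + 2 * #|EQ|.
Proof.
have h1 := cardsID [set e | sameE e] E.
have e1 : E :&: [set e | sameE e] = EL by apply/setP => x; rewrite !inE.
have e1' : E :\: [set e | sameE e] = EN by apply/setP => x; rewrite !inE andbC.
have h2 := cardsID [set e : n.+1.-tuple A | rk e < rk (revt e)] EN.
have e2 : EN :&: [set e : n.+1.-tuple A | rk e < rk (revt e)] = EQ by apply/setP => x; rewrite !inE.
have e3 : EN :\: [set e : n.+1.-tuple A | rk e < rk (revt e)] = (@revt A n.+1) @^-1: EQ.
  apply/setP => x; rewrite inE [in RHS]inE [x \in [set _ | _]]inE [revt x \in EQ]inE EN_rev revtK.
  case hx: (x \in EN); rewrite /= ?andbF ?andbT //.
  by have := EN_rk hx; rewrite neq_ltn; case: ltngtP.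
rewrite e1 e1' in h1; rewrite e2 e3 card_preimset in h2; last exact: (can_inj (@revtK _ _)).
lia.
Qed.

Lemma PE_EL : PE \subset EL.
Proof.
apply/subsetP => e; rewrite !inE palE => /andP [-> /eqP h] /=; exact: pal_same.
Qed.

Lemma rep_QV x : x \in V -> rep x \in QV.
Proof.
move=> hx; rewrite inE rep_rk andbT.
by case: (rep_cases x) => ->; rewrite ?V_rev.
Qed.

Lemma rep_EQ e : e \in EN -> rep e \in EQ.
Proof.
move=> he; have := EN_rk he; rewrite inE /rep.
case: (ltngtP (rk e) (rk (revt e))) => h // _.
  by rewrite he h.
by rewrite EN_rev he revtK h.
Qed.

Lemma ends_rep e : ends (rep e) = ends e \/ ends (rep e) = ((ends e).2, (ends e).1).
Proof. by case: (rep_cases e) => ->; [left|right; rewrite ends_rev]. Qed.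

Lemma EQ_ends f : f \in EQ -> ((ends f).1 \in QV) && ((ends f).2 \in QV).
Proof.
move=> hf; have : f \in E by move: hf; rewrite !inE => /andP [/andP [-> _] _].
rewrite inE => /fac_ftup [k <-].
by rewrite /ends pre_ftup suf_ftup !rep_QV // inE ftup_fac.
Qed.

End M.

End M.
Import M.

Module M2.

Lemma ivt (P : nat -> bool) p q : p <= q -> P p -> ~~ P q ->
  exists k, p <= k < q /\ P k /\ ~~ P k.+1.
Proof.
elim: q => [|q IH] hpq hp hq.
  by move: hpq; rewrite leqn0 => /eqP e; move: hp hq; rewrite e => ->.
case hPq: (P q).
  exists q; split => //; apply/andP; split => //.
  rewrite leq_eqVlt in hpq; case/orP: hpq => [/eqP e|]; last by [].
  by move: hp hq; rewrite e => ->.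
have hpq' : p <= q.
  rewrite leq_eqVlt in hpq; case/orP: hpq => [/eqP e|]; last by [].
  by move: hp hq; rewrite e => ->.
have [k [hk1 hk2]] := IH hpq' hp (negbT hPq).
exists k; split => //; lia.
Qed.

Lemma ivt2 (P : nat -> bool) a b : P a -> ~~ P b ->
  exists k, minn a b <= k < maxn a b /\ P k != P k.+1.
Proof.
move=> ha hb; case: (leqP a b) => hab.
  have [k [hk [h1 h2]]] := ivt hab ha hb; exists k; split.
    by rewrite ?(minn_idPl hab) ?(maxn_idPr hab).
  by rewrite h1; move: h2; case: (P k.+1).
have hba : b <= a by exact: ltnW.
have [k [hk [h1 h2]]] := @ivt (fun k => ~~ P k) b a hba hb (ltac:(by rewrite negbK)).
exists k; split.
  by rewrite ?(minn_idPr hba) ?(maxn_idPl hba).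
by move: h1 h2; case: (P k); case: (P k.+1).
Qed.

Section M2.
Variables (A : finType) (u : nat -> A).
Hypothesis cr : closed_under_reversal u.
Variable n : nat.

Notation V := (V u n). Notation E := (E u n). Notation EQ := (EQ u n).
Notation QV := (QV u n). Notation EN := (EN u n). Notation EL := (EL u n).
Notation PE := (PE u n). Notation PV := (PV u n).
Notation ends := (@ends A n).

Lemma QV_rep x : x \in QV -> rep x = x.
Proof. by rewrite inE /rep => /andP [_ ->]. Qed.

Lemma EN_ftup k : rep (ftup u n k) != rep (ftup u n k.+1) -> ftup u n.+1 k \in EN.
Proof. by move=> h; rewrite inE inE ftup_fac /sameE pre_ftup suf_ftup h. Qed.

Lemma ends_ftup k : ends (ftup u n.+1 k) = (rep (ftup u n k), rep (ftup u n k.+1)).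
Proof. by rewrite /M.ends pre_ftup suf_ftup. Qed.

Lemma cut_full : forall Y : {set n.-tuple A}, Y \subset QV -> (exists a, a \in Y) ->
  (exists b, b \in QV :\: Y) ->
  exists f, (f \in EQ) && (((ends f).1 \in Y) != ((ends f).2 \in Y)).
Proof.
move=> Y YQ [a aY] [b].
rewrite inE => /andP [bY bQ].
have aQ : a \in QV by move/subsetP: YQ; apply.
have : a \in V by move: aQ; rewrite inE => /andP [].
rewrite inE => /fac_ftup [p hp].
have : b \in V by move: bQ; rewrite inE => /andP [].
rewrite inE => /is_factorbP bF.
have [q [pq hq]] := recur cr bF p.
have hq' : ftup u n q = b by apply: val_inj; move: hq; rewrite /occurrence size_tuple.
pose P k := rep (ftup u n k) \in Y.
have Pp : P p by rewrite /P hp QV_rep.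
have Pq : ~~ P q by rewrite /P hq' QV_rep.
have [k [hk [h1 h2]]] := ivt (ltnW pq) Pp Pq.
have hne : rep (ftup u n k) != rep (ftup u n k.+1).
  by apply/negP => /eqP e; move: h1 h2; rewrite /P e => ->.
exists (rep (ftup u n.+1 k)); apply/andP; split; first exact: rep_EQ (EN_ftup hne).
by case: (ends_rep (ftup u n.+1 k)) => ->; rewrite ends_ftup /=; move: h1 h2; rewrite /P;
  case: (_ \in Y); case: (_ \in Y).
Qed.

Lemma EQ_endsS f : f \in EQ -> ((ends f).1 \in QV) && ((ends f).2 \in QV).
Proof. exact: EQ_ends. Qed.

Lemma counts (T0 : T_u u n = 0%R) (x0 : n.-tuple A) (hx0 : x0 \in V) :
  #|EL| = #|PE| /\ #|EQ|.+1 = #|QV|.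
Proof.
have hg := grow EQ_endsS cut_full (X := [set rep x0]) ltac:(by rewrite sub1set rep_QV)
  (ex_intro _ (rep x0) (set11 _)).
rewrite cards1 in hg.
have h0 : (#|E|%:Z - #|V|%:Z + 2 - #|PE|%:Z - #|PV|%:Z = 0)%R := T0.
have := countV cr n; have := countE cr n; have := subset_leq_card (@PE_EL A u n).
move: hg h0; clear; lia.
Qed.

End M2.

End M2.
Import M2.

Module M3.

Section M3.
Variables (A : finType) (u : nat -> A).
Hypothesis cr : closed_under_reversal u.
Variable n : nat.

Notation V := (V u n). Notation E := (E u n). Notation EQ := (EQ u n).
Notation QV := (QV u n). Notation EN := (EN u n). Notation EL := (EL u n).
Notation PE := (PE u n). Notation PV := (PV u n).
Notation ends := (@ends A n).

Lemma alt (T0 : T_u u n = 0%R) (x : n.-tuple A) i j : i < j -> revt x != x ->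
  ftup u n i = x -> ftup u n j = x -> (forall k, i < k < j -> ftup u n k != revt x) -> False.
Proof.
move=> ij nx hi hj hk.
have xV : x \in V by rewrite -hi inE ftup_fac.
have [cEL cQ] := counts cr T0 xV.
have ELPE : forall e, e \in EL -> e \in PE.
  by move=> e; have /subset_cardP := esym cEL => /(_ (@PE_EL A u n)) h; rewrite h.
pose P k := (i < k) && (rep (ftup u n k) == rep x).
have exP : exists k, P k by exists j; rewrite /P ij hj eqxx.
have [t Pt tmin] : exists2 t, P t & forall k, P k -> t <= k.
  by case: (ex_minnP exP) => t Pt tm; exists t.
have /andP [it /eqP rt] := Pt.
have tj : t <= j by apply: tmin; rewrite /P ij hj eqxx.
have notc : forall k, i < k < t -> rep (ftup u n k) != rep x.
  move=> k /andP [ik kt]; apply/negP => /eqP e.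
  have := tmin k; rewrite /P ik e eqxx => /(_ isT); lia.
have ft : ftup u n t = x.
  case: (rep_eq (rt : rep (ftup u n t) = rep x)) => // e.
  case: (ltngtP t j) tj => // [tj' _|tje _].
    by have := hk t; rewrite it tj' e eqxx => /(_ isT).
  by move: nx; rewrite -e tje hj eqxx.
have rxi : rep (ftup u n i) = rep x by rewrite hi.
case: (ltngtP t i.+1) => [|ti|ti].
- lia.
-
  have [s ts] : exists s, t = s.+1 by exists t.-1; lia.
  pose X0 := [set y : n.-tuple A | [exists k : 'I_t.+1, (i <= k) && (y == rep (ftup u n k))]].
  have memX0 : forall k, i <= k <= t -> rep (ftup u n k) \in X0.
    move=> k hk0; rewrite inE; apply/existsP.
    have hk' : k < t.+1 by lia.
    exists (Ordinal hk'); rewrite /= eqxx andbT; lia.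
  have X0inv : forall y, y \in X0 -> exists k, i < k <= t /\ y = rep (ftup u n k).
    move=> y; rewrite inE => /existsP [k /andP [ik /eqP ->]].
    case: (ltngtP i k) ik => // [ik _|ik _].
      by exists k; split => //; have := ltn_ord k; lia.
    by exists t; split; [lia| rewrite -ik rxi ft].
  have X0QV : X0 \subset QV.
    by apply/subsetP => y /X0inv [k [_ ->]]; apply: (rep_QV cr); rewrite inE ftup_fac.
  pose e1 := ftup u n.+1 i. pose f1 := rep e1.
  have gk : forall k, i < k < t -> rep (ftup u n.+1 k) != f1.
    move=> k hk0; apply/negP => /eqP /rep_eq [] eg.
    - have := congr1 (@pre A n) eg; rewrite /e1 !pre_ftup => e.
      by have := notc k hk0; rewrite e rxi eqxx.
    - have := congr1 (@suf A n) eg; rewrite suf_rev /e1 !suf_ftup pre_ftup hi => e.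
      have hk1 : k.+1 <= t by case/andP: hk0.
      rewrite leq_eqVlt in hk1; case/orP: hk1 => [/eqP kt|kt].
        have h : revt x = x by rewrite -e kt ft.
        by move: nx; rewrite h eqxx.
      have := notc k.+1 ltac:(lia); by rewrite e rep_rev eqxx.
  have ENk : forall k, rep (ftup u n k) != rep (ftup u n k.+1) -> rep (ftup u n.+1 k) \in EQ.
    by move=> k h; apply: (rep_EQ cr); apply: EN_ftup.
  pose F := [set f in EQ | ((ends f).1 \in X0) && ((ends f).2 \in X0) && (f != f1)].
  have FS : forall f, f \in F -> ((ends f).1 \in X0) && ((ends f).2 \in X0).
    by move=> f; rewrite inE => /andP [_ /andP [-> _]].
  have ends_in : forall k, i <= k -> k < t ->
      ((ends (rep (ftup u n.+1 k))).1 \in X0) && ((ends (rep (ftup u n.+1 k))).2 \in X0).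
    move=> k h1 h2; case: (ends_rep (ftup u n.+1 k)) => ->; rewrite ends_ftup /=.
      by rewrite !memX0 //; apply/andP; split; lia.
    by rewrite !memX0 //; apply/andP; split; lia.
  have cutF : forall Y : {set n.-tuple A}, Y \subset X0 -> (exists a, a \in Y) ->
      (exists b, b \in X0 :\: Y) ->
      exists f, (f \in F) && (((ends f).1 \in Y) != ((ends f).2 \in Y)).
    move=> Y YX [a aY] [b]; rewrite inE => /andP [bY bX].
    have aX : a \in X0 by move/subsetP: YX; apply.
    have [k1 [hk1 ea]] := X0inv a aX; have [k2 [hk2 eb]] := X0inv b bX.
    clear hk.
    have [k [hk hne]] := @ivt2 (fun k => rep (ftup u n k) \in Y) k1 k2
      ltac:(by rewrite /= -ea) ltac:(by rewrite /= -eb).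
    have ik : i < k by move: hk hk1 hk2; clear; lia.
    have kt : k < t by move: hk hk1 hk2; clear; lia.
    have hne' : rep (ftup u n k) != rep (ftup u n k.+1).
      by apply/negP => /eqP e; move: hne => /=; rewrite e eqxx.
    exists (rep (ftup u n.+1 k)); apply/andP; split.
      have h1 := ends_in k (ltnW ik) kt.
      have h2 := gk k ltac:(by rewrite ik kt).
      by rewrite inE ENk // h1 h2.
    case: (ends_rep (ftup u n.+1 k)) => ->; rewrite ends_ftup /=; move: hne => /=;
      by case: (_ \in Y); case: (_ \in Y).
  have Xsub : [set rep x; rep (ftup u n s)] \subset X0.
    apply/subsetP => y; rewrite in_set2 => /orP [] /eqP ->.
      by rewrite -rxi; apply: memX0; lia.
    by apply: memX0; lia.
  have hg := grow FS cutF Xsub (ex_intro _ (rep x) (set21 _ _)).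
  have sX : rep x != rep (ftup u n s) by rewrite eq_sym notc //; lia.
  rewrite cards2 sX in hg.
  have f2in : rep (ftup u n.+1 s) \in inner ends F [set rep x; rep (ftup u n s)].
    have hEQ : rep (ftup u n.+1 s) \in EQ.
      by apply: ENk; rewrite -ts ft eq_sym.
    have h1 := ends_in s ltac:(lia) ltac:(lia).
    have h2 := gk s ltac:(lia).
    rewrite inE [_ \in F]inE hEQ h1 h2 !andTb.
    case: (ends_rep (ftup u n.+1 s)) => ->; rewrite ends_ftup /= -ts ft !inE !eqxx ?orbT //.
  have inner_pos : 0 < #|inner ends F [set rep x; rep (ftup u n s)]|.
    by apply/card_gt0P; exists (rep (ftup u n.+1 s)).
  have f1in : f1 \in inner ends EQ X0.
    have hEQ : f1 \in EQ.
      by apply: ENk; rewrite rxi eq_sym; apply: notc; lia.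
    by rewrite inE hEQ /f1 /e1 (ends_in i) //; lia.
  have hlt : #|F| < #|inner ends EQ X0|.
    apply: proper_card; apply/properP; split.
      apply/subsetP => f; rewrite !inE => /andP [-> /andP [/andP [-> ->] _]] //.
    by exists f1 => //; rewrite inE eqxx !andbF.
  have rX0 : rep x \in X0.
    rewrite -rxi; apply: memX0; lia.
  have hfull := grow (@EQ_endsS A u cr n) (@cut_full A u cr n) X0QV (ex_intro _ (rep x) rX0).
  move: hg inner_pos hlt hfull cQ; clear; lia.
- pose e := ftup u n.+1 i.
  have eEL : e \in EL.
    by rewrite inE inE ftup_fac /sameE /e pre_ftup suf_ftup -ti ft hi eqxx.
  have /ELPE := eEL; rewrite inE => /andP [_]; rewrite palE => /eqP he.
  have := suf_rev e; rewrite he /e pre_ftup suf_ftup -ti ft hi => ex.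
  by move: nx; rewrite -ex eqxx.
Qed.
End M3.

End M3.
Import M3.

Lemma half (A : finType) (u : nat -> A) (n : nat) (w : seq A) :
  closed_under_reversal u -> T_u u n = 0%R -> size w = n -> rev w != w ->
  forall i j, i < j -> occurrence u w i -> occurrence u w j ->
       exists k, i < k < j /\ occurrence u (rev w) k.
Proof.
move=> cr T0 sw nw i j ij oi oj.
apply: NNPP => hne.
have hi : factor_at u i n = w by move: oi; rewrite /occurrence sw.
have hj : ftup u n j = ftup u n i.
  apply: val_inj => /=; rewrite hi; move: oj; by rewrite /occurrence sw.
apply: (alt cr T0 ij (x := ftup u n i)) => //.
  by apply/negP => /eqP /(congr1 val) /=; rewrite hi => e; move: nw; rewrite e eqxx.
move=> k hk; apply/negP => /eqP /(congr1 val) /= e.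
apply: hne; exists k; split => //.
by rewrite /occurrence size_rev sw e hi.
Qed.

Theorem corollary13 (A : finType) (u : nat -> A) (N : nat) :
  aperiodic u ->
  closed_under_reversal u ->
  (forall n, N <= n -> T_u u n = 0%R) ->
  forall w : seq A, is_factor u w -> N <= size w -> rev w != w ->
    (forall i j, i < j -> occurrence u w i -> occurrence u w j ->
       exists k, i < k < j /\ occurrence u (rev w) k) /\
    (forall i j, i < j -> occurrence u (rev w) i -> occurrence u (rev w) j ->
       exists k, i < k < j /\ occurrence u w k).
Proof.
move=> _ cr hT w _ hN nw; split.
  exact: (half cr (hT _ hN) (erefl _) nw).
have := @half A u (size w) (rev w) cr (hT _ hN) (size_rev w).
rewrite revK eq_sym; exact.
Qed.
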